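(* Let $\mathbb{K}\in\{\mathbb{R},\mathbb{C}\}$, $A\in\mathbb{K}^{n\times n}$, and let $Q_1,Q_2\in\mathbb{K}^{n\times n}$ be unitary (orthogonal if $\mathbb{K}=\mathbb{R}$). Let $(Q_1A^{*}Q_2A)^{1/2}$ denote a square root of $Q_1A^{*}Q_2A$. Then $$|\lambda_{\max}((Q_1A^{*}Q_2A)^{1/2})|\le\sigma_{\max}(A),\qquad |\lambda_{\min}((Q_1A^{*}Q_2A)^{1/2})|\ge\sigma_{\min}(A).$$
   Context: $\cdot^{*}$ denotes the conjugate transpose (transpose if $\mathbb{K}=\mathbb{R}$). For a square matrix $B$, $\lambda_{\max}(B)$ and $\lambda_{\min}(B)$ denote eigenvalues of $B$ of largest and smallest modulus, respectively; $\sigma_{\max}(A)$, $\sigma_{\min}(A)$ denote the largest and smallest singular values of $A$. *)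

(* Defs.v *)
From HB Require Import structures.
From mathcomp Require Import all_boot all_order all_algebra.
From mathcomp Require Export sesquilinear spectral.
Set Implicit Arguments. Unset Strict Implicit. Unset Printing Implicit Defensive.
Import Order.TTheory GRing.Theory Num.Theory.
Local Open Scope ring_scope.
Local Open Scope sesquilinear_scope.

(* Field K: any numClosedFieldType C (e.g. algC, complex R). *)

Definition singular_value (C : numClosedFieldType) (n : nat) (A : 'M[C]_n) (s : C) : Prop :=
  0 <= s /\ eigenvalue (A ^t* *m A) (s ^+ 2).

Definition is_sigma_max (C : numClosedFieldType) (n : nat) (A : 'M[C]_n) (s : C) : Prop :=
  singular_value A s /\ forall t, singular_value A t -> t <= s.

Definition is_sigma_min (C : numClosedFieldType) (n : nat) (A : 'M[C]_n) (s : C) : Prop :=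
  singular_value A s /\ forall t, singular_value A t -> s <= t.

Definition is_lambda_max (C : numClosedFieldType) (n : nat) (B : 'M[C]_n) (l : C) : Prop :=
  eigenvalue B l /\ forall m, eigenvalue B m -> `|m| <= `|l|.

Definition is_lambda_min (C : numClosedFieldType) (n : nat) (B : 'M[C]_n) (l : C) : Prop :=
  eigenvalue B l /\ forall m, eigenvalue B m -> `|l| <= `|m|.

(* Main.v *)
Require Import Defs.
From HB Require Import structures.
From mathcomp Require Import all_boot all_order all_algebra.
From mathcomp Require Import sesquilinear spectral.
Import Order.TTheory GRing.Theory Num.Theory.
Local Open Scope ring_scope.
Local Open Scope sesquilinear_scope.

Section S.
Variable C : numClosedFieldType.
Variable n : nat.

Definition Nm (x : 'rV[C]_n) : C := (x *m x ^t*) 0 0.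

Lemma Nm_sum x : Nm x = \sum_j `|x 0 j| ^+ 2.
Proof. rewrite /Nm !mxE; apply: eq_bigr => j _; by rewrite !mxE normCK. Qed.

Lemma Nm_ge0 x : 0 <= Nm x.
Proof. rewrite Nm_sum; apply: sumr_ge0 => j _; exact: exprn_ge0. Qed.

Lemma Nm_gt0 x : x != 0 -> 0 < Nm x.
Proof.
move=> xn0; rewrite lt_def Nm_ge0 andbT; apply: contraNN xn0 => /eqP.
rewrite Nm_sum => /eqP; rewrite psumr_eq0 => [/allP H|j _]; last exact: exprn_ge0.
apply/eqP/rowP => j; rewrite mxE; have := H j (mem_index_enum j).
by rewrite /= sqrf_eq0 normr_eq0 => /eqP.
Qed.

Lemma trC_mul m p (X : 'M[C]_(m, n)) (Y : 'M[C]_(n, p)) : (X *m Y)^t* = Y^t* *m X^t*.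
Proof. by rewrite trmx_mul map_mxM. Qed.

Lemma Nm_unitary x (Q : 'M[C]_n) : Q \is unitarymx -> Nm (x *m Q) = Nm x.
Proof. by move=> Qu; rewrite /Nm trC_mul mulmxA mulmxtVK. Qed.

Lemma Nm_scale a x : Nm (a *: x) = `|a| ^+ 2 * Nm x.
Proof.
rewrite !Nm_sum mulr_sumr; apply: eq_bigr => j _.
by rewrite mxE normrM exprMn.
Qed.

Lemma Nm_mul x (B : 'M[C]_n) : Nm (x *m B) = (x *m (B *m B^t*) *m x^t*) 0 0.
Proof. by rewrite /Nm trC_mul !mulmxA. Qed.


Lemma trCK_mul (B : 'M[C]_n) : (B^t* *m B)^t* = B^t* *m B.
Proof. by rewrite trC_mul trmxCK. Qed.

Lemma key (B : 'M[C]_n) x : exists d c : 'I_n -> C,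
  [/\ forall i, 0 <= c i, forall i, singular_value B (sqrtC (d i)) /\ 0 <= d i,
   Nm x = \sum_i c i & Nm (x *m B^t* ) = \sum_i d i * c i].
Proof.
set H := B^t* *m B.
have Hn : H \is normalmx by apply/normalmxP; rewrite /H trCK_mul.
have HE := orthomx_spectralP Hn.
set P := spectralmx H in HE; set D := spectral_diag H in HE.
have Pu : P \is unitarymx by exact: spectral_unitarymx.
rewrite invmx_unitary // in HE.
set y := x *m P^t*.
exists (fun i => D 0 i), (fun i => `|y 0 i| ^+ 2); split.
- by move=> i; exact: exprn_ge0.
- move=> i; set w := row i P.
  have Nw : Nm w = 1.
    by have := (row_unitarymxP Pu) i i; rewrite dotmxE eqxx /Nm => ->.
  have wH : w *m H = D 0 i *: w.
    rewrite /w -row_mul HE !mulmxA (unitarymxP Pu) mul1mx mul_diag_mx.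
    by apply/rowP => j; rewrite !mxE.
  have Di : D 0 i = Nm (w *m B^t* ).
    by rewrite Nm_mul trmxCK -/H wH -scalemxAl mxE -/(Nm w) Nw mulr1.
  have D0 : 0 <= D 0 i by rewrite Di Nm_ge0.
  split => //; split; first by rewrite sqrtC_ge0.
  rewrite sqrtCK; apply/eigenvalueP; exists w => //.
  by apply: contra_eqN Nw => /eqP ->; rewrite /Nm mul0mx mxE eq_sym oner_eq0.
- by rewrite -(@Nm_unitary x (P ^t*)) ?trmxC_unitary // -/y Nm_sum.
- rewrite Nm_mul trmxCK -/H HE.
  have -> : x *m (P^t* *m diag_mx D *m P) *m x^t* = y *m diag_mx D *m y^t*.
    by rewrite /y trC_mul trmxCK !mulmxA.
  rewrite mul_mx_diag !mxE; apply: eq_bigr => j _; rewrite !mxE normCK.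
  by rewrite mulrAC mulrC mulrA.
Qed.


Lemma sv_le (B : 'M[C]_n) s t : 0 <= s -> 0 <= t -> singular_value B t ->
  (forall t, singular_value B t -> t <= s) -> t ^+ 2 <= s ^+ 2.
Proof. move=> s0 t0 sv H; rewrite ler_pXn2r ?nnegrE //; exact: H. Qed.

Lemma bound_max (B : 'M[C]_n) s x : is_sigma_max B s ->
  Nm (x *m B^t* ) <= s ^+ 2 * Nm x.
Proof.
move=> [[s0 _] Hs]; have [d [c [c0 dH -> ->]]] := key B x.
rewrite mulr_sumr; apply: ler_sum => i _; apply: ler_wpM2r => //.
have [sv d0] := dH i; rewrite -(sqrtCK (d i)).
apply: sv_le sv Hs => //; by rewrite sqrtC_ge0.
Qed.

Lemma bound_min (B : 'M[C]_n) s x : is_sigma_min B s ->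
  s ^+ 2 * Nm x <= Nm (x *m B^t* ).
Proof.
move=> [[s0 _] Hs]; have [d [c [c0 dH -> ->]]] := key B x.
rewrite mulr_sumr; apply: ler_sum => i _; apply: ler_wpM2r => //.
have [sv d0] := dH i; rewrite -(sqrtCK (d i)).
by rewrite ler_pXn2r ?nnegrE ?sqrtC_ge0 //; apply: Hs.
Qed.

Lemma eig0 (M : 'M[C]_n) : eigenvalue M 0 = (M \notin unitmx).
Proof.
by rewrite /eigenvalue /eigenspace raddf0 subr0 kermx_eq0 row_free_unit.
Qed.

Lemma eig_swap (X Y : 'M[C]_n) a : eigenvalue (X *m Y) a -> eigenvalue (Y *m X) a.
Proof.
have [->|a0] := eqVneq a 0.
  by rewrite !eig0 !unitmx_mul andbC.
move=> /eigenvalueP [v vXY v0]; apply/eigenvalueP; exists (v *m X).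
  by rewrite mulmxA -(mulmxA v) vXY -scalemxAl.
apply: contra_neq v0 => vX0.
have : v *m X *m Y = a *: v by rewrite -mulmxA.
rewrite vX0 mul0mx => /esym/eqP; rewrite scaler_eq0 (negPf a0) /= => /eqP //.
Qed.

Lemma sv_tr (A : 'M[C]_n) t : singular_value (A^t* ) t <-> singular_value A t.
Proof.
rewrite /singular_value trmxCK; split => -[t0 e]; split => //; exact: eig_swap.
Qed.

Lemma sigma_max_tr (A : 'M[C]_n) s : is_sigma_max A s -> is_sigma_max (A^t* ) s.
Proof. by move=> [h1 h2]; split; [apply/sv_tr | move=> t /sv_tr; apply: h2]. Qed.

Lemma sigma_min_tr (A : 'M[C]_n) s : is_sigma_min A s -> is_sigma_min (A^t* ) s.
Proof. by move=> [h1 h2]; split; [apply/sv_tr | move=> t /sv_tr; apply: h2]. Qed.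

Lemma bound_max' (A : 'M[C]_n) s x : is_sigma_max A s -> Nm (x *m A) <= s ^+ 2 * Nm x.
Proof. by move=> /sigma_max_tr /(@bound_max _ _ x); rewrite trmxCK. Qed.

Lemma bound_min' (A : 'M[C]_n) s x : is_sigma_min A s -> s ^+ 2 * Nm x <= Nm (x *m A).
Proof. by move=> /sigma_min_tr /(@bound_min _ _ x); rewrite trmxCK. Qed.

End S.

Arguments Nm {C n}.

Theorem mainTheorem2 (C : numClosedFieldType) (n : nat) (A Q1 Q2 S : 'M[C]_n) :
  Q1 \is unitarymx -> Q2 \is unitarymx ->
  S *m S = Q1 *m A ^t* *m Q2 *m A ->
  (forall l s, is_lambda_max S l -> is_sigma_max A s -> `|l| <= s) /\
  (forall l s, is_lambda_min S l -> is_sigma_min A s -> s <= `|l|).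
Proof.
move=> Q1u Q2u HS.
have step : forall l v, v *m S = l *: v ->
    Nm (v *m Q1 *m A^t* *m Q2 *m A) = (`|l| ^+ 2) ^+ 2 * Nm v.
  move=> l v vS.
  have -> : v *m Q1 *m A^t* *m Q2 *m A = (l ^+ 2) *: v.
    by rewrite -!mulmxA !(mulmxA Q1) (mulmxA _ Q2) -HS mulmxA vS -scalemxAl vS scalerA.
  by rewrite Nm_scale normrX.
split => l s [/eigenvalueP [v vS v0] _] Hs; have := step l v vS;
  have vpos := @Nm_gt0 _ _ v v0; have s0 : 0 <= s by case: Hs => -[].
- move=> E.
  have : (`|l| ^+ 2) ^+ 2 * Nm v <= (s ^+ 2) ^+ 2 * Nm v.
    rewrite -E; apply: (le_trans (@bound_max' _ _ _ _ _ Hs)).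
    rewrite (Nm_unitary _ _ _ _ Q2u) [X in _ <= X]mulrC [(s ^+ 2) ^+ 2]expr2 mulrA.
    rewrite [X in _ <= X]mulrC ler_wpM2l ?exprn_ge0 //.
    apply: (le_trans (@bound_max _ _ _ _ _ Hs)).
    by rewrite (Nm_unitary _ _ _ _ Q1u) mulrC.
  rewrite ler_pM2r // ler_pXn2r ?nnegrE ?exprn_ge0 //.
  by rewrite ler_pXn2r ?nnegrE.
- move=> E.
  have : (s ^+ 2) ^+ 2 * Nm v <= (`|l| ^+ 2) ^+ 2 * Nm v.
    rewrite -E; apply: le_trans (@bound_min' _ _ _ _ _ Hs).
    rewrite (Nm_unitary _ _ _ _ Q2u) [(s ^+ 2) ^+ 2]expr2 -mulrA.
    rewrite ler_wpM2l ?exprn_ge0 //.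
    apply: le_trans (@bound_min _ _ _ _ _ Hs).
    by rewrite (Nm_unitary _ _ _ _ Q1u).
  rewrite ler_pM2r // ler_pXn2r ?nnegrE ?exprn_ge0 //.
  by rewrite ler_pXn2r ?nnegrE.
Qed.
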